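(* Let $C_0$ be a binary linear $[n_0,n_0-r_0]_2 3$ code whose parity-check matrix $H_0=[h_1\cdots h_{n_0}]$ admits a $(3,0)$-partition $\mathcal P_0$ into $p_0$ subsets. Let $\mathcal V_{2m}$ be a binary linear $[n_{2m},n_{2m}-2m]_2 2$ code with parity-check matrix $\mathcal H_{2m}$ admitting a $2$-partition $\mathcal P_{2m}$ into $p_{2m}$ subsets. Let $m\ge2$ with $2^m-1\ge p_0$, choose an indicator assignment with all $\beta_j\in\mathbb{F}_{2^m}^*=\mathbb{F}_{2^m}\setminus\{0\}$, let $$D_4=\begin{bmatrix}0_{r_0}&0_{r_0}\\ W_m&0_m\\ 0_{2m}&\mathcal H_{2m}\end{bmatrix},\qquad H_C=[D_4\ A_3(h_1,\beta_1)\ \cdots\ A_3(h_{n_0},\beta_{n_0})].$$ Then $H_C$ is the parity-check matrix of a binary linear code $C$ of length $n=2^m(n_0+1)+n_{2m}-1$, codimension $r=r_0+3m$ and covering radius $3$. Moreover: $H_C$ admits a $(3,0)$-partition into at most $p_0+p_{2m}+1$ subsets and a $(3,1)$-partition into at most $p_0+p_{2m}+3$ subsets; if $H_0$ (resp. $\mathcal H_{2m}$) has three columns summing to zero lying in three distinct subsets of $\mathcal P_0$ (resp. $\mathcal P_{2m}$), then $H_C$ admits a $(3,1)$-partition into at most $p_0+p_{2m}+1$ subsets; and if every vector of $\mathbb{F}_2^{2m}$ is a sum of $2$ or $3$ columns of $\mathcal H_{2m}$, then the trivial partition of $H_C$ (into singletons) is a $(3,2)$-partition, i.e. $C$ is a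 $(3,2)$-object.
   Context: Covering radius of a binary linear code with $r\times n$ parity-check matrix $H$: smallest $R$ such that every vector of $\mathbb{F}_2^r$ is a sum of at most $R$ columns of $H$. $[n,n-r]_2R$: length $n$, codimension $r$, covering radius $R$. For $0\le\ell\le R$, an $(R,\ell)$-partition of $H$ is a partition of its columns into nonempty subsets such that every vector of $\mathbb{F}_2^r$ (including zero) is the sum of at least $\ell$ and at most $R$ columns lying in pairwise distinct subsets (zero = empty sum when $\ell=0$); a code is an $(R,\ell)$-object if a parity-check matrix admits an $(R,\ell)$-partition. A $2$-partition means a $(2,0)$-partition. Construction notation: identify $\mathbb{F}_2^m$ with $\mathbb{F}_{2^m}$ via a fixed basis. For $h\in\mathbb{F}_2^{r_0}$ and $\beta\in\mathbb{F}_{2^m}$, $A_3(h,\beta)$ is the $(r_0+3m)\times2^m$ matrix with columns $(h,\xi,\beta\xi,\beta^2\xi)^T$, $\xi\in\mathbb{F}_{2^m}$. $W_m$ is the $m\times(2^m-1)$ matrix of all nonzero vectors of $\mathbb{F}_2^m$; $0_v$ denotes a zero block with $v$ rows. An indicator assignment for $H_0,\mathcal P_0$ assigns $\beta_j$ to column $h_j$ with $\beta_i\ne\beta_j$ whenever $h_i,h_j$ lie in distinct subsets of $\mathcal P_0$. *)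

(* Defs.v *)
From HB Require Import structures.
From mathcomp Require Import all_boot all_order all_algebra all_field.
Set Implicit Arguments. Unset Strict Implicit. Unset Printing Implicit Defensive.
Import GRing.Theory.
Local Open Scope ring_scope.

Definition colsum r n (H : 'M['F_2]_(r, n)) (S : {set 'I_n}) : 'cV['F_2]_r :=
  \sum_(j in S) col j H.

Definition covers r n (H : 'M['F_2]_(r, n)) (R : nat) : Prop :=
  forall v : 'cV['F_2]_r, exists S : {set 'I_n}, (#|S| <= R)%N /\ colsum H S = v.

Definition covering_radius r n (H : 'M['F_2]_(r, n)) (R : nat) : Prop :=
  covers H R /\ forall R', covers H R' -> (R <= R')%N.

(* f : 'I_n -> 'I_p encodes a partition of the columns of H into p nonempty
   subsets (column j lies in subset f j); it is an (R,l)-partition if every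
   vector is a sum of at least l and at most R columns lying in pairwise
   distinct subsets. *)
Definition RL_partition r n (H : 'M['F_2]_(r, n)) (R l : nat) p (f : 'I_n -> 'I_p)
  : Prop :=
  (forall k : 'I_p, exists j, f j = k) /\
  forall v : 'cV['F_2]_r, exists S : {set 'I_n},
    (l <= #|S| <= R)%N /\ {in S &, injective f} /\ colsum H S = v.

Definition admits_partition_atmost r n (H : 'M['F_2]_(r, n)) (R l k : nat) : Prop :=
  exists p, (p <= k)%N /\ exists f : 'I_n -> 'I_p, RL_partition H R l f.

Definition three_cols_zero r n (H : 'M['F_2]_(r, n)) p (f : 'I_n -> 'I_p) : Prop :=
  exists i j k : 'I_n, [/\ f i != f j, f i != f k, f j != f k &
                           col i H + col j H + col k H = 0].

(* column labels of H_C: nonzero vectors of F_2^m (the columns of W_m),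
   columns of H_{2m}, and pairs (j, xi) for the blocks A_3(h_j, beta_j) *)
Definition nzvec m := {w : 'cV['F_2]_m | w != 0}.
Definition HC_index (F : finFieldType) m n2 n0 :=
  ((nzvec m + 'I_n2) + ('I_n0 * F))%type.

Definition HC_col (F : finFieldType) r0 m n0 n2 (phi : F -> 'cV['F_2]_m)
  (H0 : 'M['F_2]_(r0, n0)) (H2 : 'M['F_2]_(m + m, n2)) (beta : 'I_n0 -> F)
  (x : HC_index F m n2 n0) : 'cV['F_2]_(r0 + (m + (m + m))) :=
  match x with
  | inl (inl w) => col_mx 0 (col_mx (val w) 0)
  | inl (inr j) => col_mx 0 (col_mx 0 (col j H2))
  | inr (j, xi) => col_mx (col j H0)
       (col_mx (phi xi) (col_mx (phi (beta j * xi)) (phi (beta j ^+ 2 * xi))))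
  end.

(* H_C = [D_4  A_3(h_1,beta_1) ... A_3(h_{n0},beta_{n0})] (columns listed in
   the enumeration order of HC_index) *)
Definition HC (F : finFieldType) r0 m n0 n2 (phi : F -> 'cV['F_2]_m)
  (H0 : 'M['F_2]_(r0, n0)) (H2 : 'M['F_2]_(m + m, n2)) (beta : 'I_n0 -> F)
  : 'M['F_2]_(r0 + (m + (m + m)), #|{: HC_index F m n2 n0}|) :=
  \matrix_(i, j) HC_col phi H0 H2 beta (enum_val j) i 0.

(* Main.v *)
Require Import Defs.
From HB Require Import structures.
From mathcomp Require Import all_boot all_order all_algebra all_field.
From mathcomp Require Import ring zify.
Set Implicit Arguments. Unset Strict Implicit. Unset Printing Implicit Defensive.
Import GRing.Theory.
Local Open Scope ring_scope.

Lemma rank_cover r n (H : 'M['F_2]_(r,n)) R : covers H R -> \rank H = r.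
Proof.
move=> cov; rewrite -mxrank_tr; apply/eqP; change (row_full H^T); rewrite -sub1mx; apply/row_subP => i.
have [S [_ eS]] := cov ((row i 1%:M)^T).
have -> : row i 1%:M = (colsum H S)^T by rewrite eS trmxK.
rewrite /colsum raddf_sum /=; apply: summx_sub => j _; by rewrite tr_col row_sub.
Qed.

Lemma uniq_map_inj (T1 T2 : eqType) (f : T1 -> T2) (s : seq T1) :
  uniq (map f s) -> {in s &, injective f}.
Proof.
elim: s => //= y s IH /andP[ny us] x1 x2; rewrite !inE.
case/orP=> [/eqP->|h1]; case/orP=> [/eqP->|h2] //.
- by move=> e; case/negP: ny; rewrite e map_f.
- by move=> e; case/negP: ny; rewrite -e map_f.
- exact: IH.
Qed.

Lemma sum_col_mx (I : Type) a b c (s : seq I) (f : I -> 'M['F_2]_(a, c)) (g : I -> 'M['F_2]_(b, c)) :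
  \sum_(x <- s) col_mx (f x) (g x) = col_mx (\sum_(x <- s) f x) (\sum_(x <- s) g x).
Proof.
elim: s => [|y s IH]; first by rewrite !big_nil col_mx0.
by rewrite !big_cons IH add_col_mx.
Qed.


Lemma dbl a b (v : 'M['F_2]_(a, b)) : v + v = 0.
Proof. by apply/matrixP => i j; rewrite !mxE; case: (v i j) => -[|[|k]] Hk; apply/val_inj. Qed.

Lemma exists_notin (T : finType) (A : {set T}) : (#|A| < #|T|)%N -> exists x, x \notin A.
Proof.
move=> lt; apply/existsP; rewrite -negb_forall; apply/negP => /forallP h.
have : [set: T] \subset A by apply/subsetP => x _; exact: h.
by move/subset_leq_card; rewrite cardsT leqNgt lt.
Qed.

Lemma card_cV m : #|{: 'cV['F_2]_m}| = (2 ^ m)%N.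
Proof. by rewrite card_mx card_Fp // muln1. Qed.

Lemma colsum2 r n (H : 'M['F_2]_(r, n)) j1 j2 : j1 != j2 ->
  colsum H [set j1; j2] = col j1 H + col j2 H.
Proof. by move=> ne; rewrite /colsum big_setU1 ?inE //= big_set1. Qed.

Lemma colsum1 r n (H : 'M['F_2]_(r, n)) j : colsum H [set j] = col j H.
Proof. by rewrite /colsum big_set1. Qed.

Lemma colsum0 r n (H : 'M['F_2]_(r, n)) : colsum H set0 = 0.
Proof. by rewrite /colsum big_set0. Qed.

Section Gen.
Variables (F : finFieldType) (m r0 n0 n2 : nat) (phi : F -> 'cV['F_2]_m)
  (H0 : 'M['F_2]_(r0, n0)) (H2 : 'M['F_2]_(m + m, n2)) (beta : 'I_n0 -> F).

Local Notation idx := (HC_index F m n2 n0).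
Local Notation C := (HC_col phi H0 H2 beta).
Local Notation H := (HC phi H0 H2 beta).

Lemma colH (j : 'I_#|{: idx}|) : col j H = C (enum_val j).
Proof. by apply/matrixP => i k; rewrite !mxE (ord1 k). Qed.

Lemma colsum_seq (s : seq idx) : uniq s ->
  colsum H [set enum_rank x | x in s] = \sum_(x <- s) C x.
Proof.
move=> us; rewrite /colsum big_imset; last by move=> x y _ _ /enum_rank_inj.
rewrite (big_uniq _ us) /=; apply: eq_bigr => x _; by rewrite colH enum_rankK.
Qed.

Lemma card_seq (s : seq idx) : uniq s ->
  #|[set enum_rank x | x in s]| = size s.
Proof.
move=> us; rewrite card_imset; last exact: enum_rank_inj.
by apply/card_uniqP.
Qed.


Lemma part_of (K : finType) (cls : idx -> K) (f : 'I_#|{: idx}| -> 'I_#|K|) l :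
  (forall j, f j = enum_rank (cls (enum_val j))) ->
  (forall k, exists x, cls x = k) ->
  (forall v, exists s : seq idx,
     [/\ (l <= size s <= 3)%N, uniq (map cls s) & \sum_(x <- s) C x = v]) ->
  RL_partition H 3 l f.
Proof.
move=> Hf sur cov; split.
  move=> k; have [x ex] := sur (enum_val k); exists (enum_rank x).
  by rewrite Hf enum_rankK ex enum_valK.
move=> v; have [s [sz us es]] := cov v.
have us' : uniq s := map_uniq us.
exists [set enum_rank x | x in s]; split; first by rewrite card_seq.
split; last by rewrite colsum_seq.
move=> j1 j2 /imsetP[x1 x1s ->] /imsetP[x2 x2s ->].
rewrite !Hf !enum_rankK => /enum_rank_inj e.
by rewrite (uniq_map_inj us x1s x2s e).
Qed.
End Gen.

Section Core.
Variables (F : finFieldType) (m r0 n0 p0 n2 p2 : nat) (phi : F -> 'cV['F_2]_m)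
  (H0 : 'M['F_2]_(r0, n0)) (f0 : 'I_n0 -> 'I_p0)
  (H2 : 'M['F_2]_(m + m, n2)) (f2 : 'I_n2 -> 'I_p2) (beta : 'I_n0 -> F).

Local Notation idx := (HC_index F m n2 n0).
Local Notation C := (HC_col phi H0 H2 beta).

Definition cls (x : idx) : 'I_p0 + ('I_p2 + unit) :=
  match x with
  | inl (inl _) => inr (inr tt)
  | inl (inr k) => inr (inl (f2 k))
  | inr (j, _) => inl (f0 j)
  end.

Definition Wl (w : 'cV['F_2]_m) : seq idx :=
  if insub w is Some w' then [:: inl (inl w')] else [::].
Definition H2l (S2 : {set 'I_n2}) : seq idx := map (fun k => inl (inr k)) (enum S2).
Definition A3l (s0 : seq 'I_n0) (xi : 'I_n0 -> F) : seq idx :=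
  map (fun j => inr (j, xi j)) s0.

Lemma Wl_sum w : \sum_(x <- Wl w) C x = col_mx 0 (col_mx w 0).
Proof.
rewrite /Wl; case: insubP => [w' _ <- | /negPn/eqP ->].
  by rewrite big_cons big_nil addr0.
by rewrite big_nil !col_mx0.
Qed.

Lemma Wl_size w : size (Wl w) = (w != 0).
Proof. by rewrite /Wl; case: insubP => [w' /= -> _ | /negPn/eqP ->]; rewrite ?eqxx. Qed.

Lemma H2l_sum S2 : \sum_(x <- H2l S2) C x = col_mx 0 (col_mx 0 (colsum H2 S2)).
Proof.
rewrite /H2l big_map /= sum_col_mx sum_col_mx big1 // big1 // big_enum.
by [].
Qed.

Lemma A3l_sum s0 xi : \sum_(x <- A3l s0 xi) C x = col_mx (\sum_(j <- s0) col j H0)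
       (col_mx (\sum_(j <- s0) phi (xi j))
          (\sum_(j <- s0) col_mx (phi (beta j * xi j)) (phi (beta j ^+ 2 * xi j)))).
Proof. by rewrite /A3l big_map /= sum_col_mx sum_col_mx. Qed.

Lemma assemble (s0 : seq 'I_n0) xi w (S2 : {set 'I_n2}) :
  uniq (map f0 s0) -> {in S2 &, injective f2} ->
  [/\ uniq (map cls (A3l s0 xi ++ Wl w ++ H2l S2)),
    size (A3l s0 xi ++ Wl w ++ H2l S2) = (size s0 + (w != 0%R) + #|S2|)%N &
    \sum_(x <- A3l s0 xi ++ Wl w ++ H2l S2) C x = col_mx (\sum_(j <- s0) col j H0)
       (col_mx (\sum_(j <- s0) phi (xi j) + w)
          (\sum_(j <- s0) col_mx (phi (beta j * xi j)) (phi (beta j ^+ 2 * xi j))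
            + colsum H2 S2))].
Proof.
move=> u0 i2; split.
- rewrite !map_cat !cat_uniq.
  have -> : map cls (A3l s0 xi) = map inl (map f0 s0) by rewrite /A3l -!map_comp.
  have -> : map cls (H2l S2) = map (fun k => inr (inl k)) (map f2 (enum S2))
    by rewrite /H2l -!map_comp.
  rewrite [uniq (map inl _)]map_inj_uniq; last by move=> a b [].
  rewrite [uniq (map (fun k => inr (inl k)) _)]map_inj_uniq; last by move=> a b [].
  rewrite [uniq (map f2 _)]map_inj_in_uniq ?enum_uniq; last by move=> a b; rewrite !mem_enum; exact: i2.
  rewrite u0 /=.
  have hW : forall y, y \in map cls (Wl w) -> y = inr (inr tt).
    by move=> y; rewrite /Wl; case: insubP => [w' _ _|_] //=; rewrite inE => /eqP.
  apply/and4P; split.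
  + rewrite has_cat negb_or; apply/andP; split; apply/hasPn => y.
      by move/hW => ->; apply/mapP => -[].
    by case/mapP => z _ ->; apply/mapP => -[].
  + by rewrite /Wl; case: insubP.
  + by apply/hasPn => y; case/mapP => z _ ->; apply/negP => /hW.
  + by [].
- by rewrite !size_cat size_map Wl_size /H2l size_map -cardE addnA.
- rewrite !big_cat /= A3l_sum Wl_sum H2l_sum !add_col_mx !addr0 !add0r.
  by [].
Qed.
End Core.
Lemma solve2 (K : fieldType) (b1 b2 b c : K) : b1 != 0 -> b2 != 0 -> b1 != b2 ->
  exists x1 x2, b1 * x1 + b2 * x2 = b /\ b1 ^+ 2 * x1 + b2 ^+ 2 * x2 = c.
Proof.
move=> n1 n2 n12; have d : b1 - b2 != 0 by rewrite subr_eq0.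
have d' : b2 - b1 != 0 by rewrite subr_eq0 eq_sym.
exists ((c - b2 * b) / (b1 * (b1 - b2))), ((c - b1 * b) / (b2 * (b2 - b1))).
by split; field; rewrite ?mulf_neq0 ?d ?d' ?n1 ?n2 ?d12 ?d13 ?d23 ?d21 ?d31 ?d32.
Qed.

Lemma solve3 (K : fieldType) (b1 b2 b3 a b c : K) : b1 != b2 -> b1 != b3 -> b2 != b3 ->
  exists x1 x2 x3, [/\ x1 + x2 + x3 = a, b1 * x1 + b2 * x2 + b3 * x3 = b &
      b1 ^+ 2 * x1 + b2 ^+ 2 * x2 + b3 ^+ 2 * x3 = c].
Proof.
move=> n12 n13 n23.
have d12 : b1 - b2 != 0 by rewrite subr_eq0.
have d13 : b1 - b3 != 0 by rewrite subr_eq0.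
have d23 : b2 - b3 != 0 by rewrite subr_eq0.
have d21 : b2 - b1 != 0 by rewrite subr_eq0 eq_sym.
have d31 : b3 - b1 != 0 by rewrite subr_eq0 eq_sym.
have d32 : b3 - b2 != 0 by rewrite subr_eq0 eq_sym.
exists ((c - (b2 + b3) * b + b2 * b3 * a) / ((b1 - b2) * (b1 - b3))),
  ((c - (b1 + b3) * b + b1 * b3 * a) / ((b2 - b1) * (b2 - b3))),
  ((c - (b1 + b2) * b + b1 * b2 * a) / ((b3 - b1) * (b3 - b2))).
by split; field; rewrite ?mulf_neq0 ?d ?d' ?n1 ?n2 ?d12 ?d13 ?d23 ?d21 ?d31 ?d32.
Qed.

Section Main.
Variables (F : finFieldType) (m r0 n0 p0 n2 p2 : nat) (phi : F -> 'cV['F_2]_m)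
  (H0 : 'M['F_2]_(r0, n0)) (f0 : 'I_n0 -> 'I_p0)
  (H2 : 'M['F_2]_(m + m, n2)) (f2 : 'I_n2 -> 'I_p2) (beta : 'I_n0 -> F)
  (phiI : 'cV['F_2]_m -> F).
Hypotheses (phiD : forall x y, phi (x + y) = phi x + phi y)
  (phiK : cancel phi phiI) (phiIK : cancel phiI phi)
  (P0 : RL_partition H0 3 0 f0) (P2 : RL_partition H2 2 0 f2)
  (bnz : forall j, beta j != 0) (binj : forall i j, f0 i != f0 j -> beta i != beta j).

Local Notation idx := (HC_index F m n2 n0).
Local Notation C := (HC_col phi H0 H2 beta).
Local Notation cls := (cls f0 f2 (m:=m) (F:=F)).


Local Notation H := (HC phi H0 H2 beta).

Definition tpo (x : idx) : option 'I_n0 :=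
  match x with inr (j, _) => Some j | _ => None end.
Definition Tof (o : option 'I_n0) : {set 'I_n0} :=
  if o is Some j then [set j] else set0.

Lemma tpoP x : usubmx (C x) = colsum H0 (Tof (tpo x)).
Proof. by case: x => [[w|k]|[j xi]]; rewrite /= col_mxKu ?colsum0 ?colsum1. Qed.

Lemma Tof_card o : (#|Tof o| <= 1)%N.
Proof. by case: o => [j|]; rewrite /= ?cards1 ?cards0. Qed.

Lemma Tof2 o1 o2 : exists T : {set 'I_n0}, (#|T| <= 2)%N /\ colsum H0 T = colsum H0 (Tof o1) + colsum H0 (Tof o2).
Proof.
case: o1 => [j1|]; case: o2 => [j2|] /=; rewrite ?colsum0 ?addr0 ?add0r.
- have [->|ne] := eqVneq j1 j2.
    by exists set0; rewrite cards0 colsum0 colsum1 dbl.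
  by exists [set j1; j2]; rewrite cards2 ne colsum2 // !colsum1.
- by exists [set j1]; rewrite cards1.
- by exists [set j2]; rewrite cards1.
- by exists set0; rewrite cards0 colsum0.
Qed.

Lemma lower (CR0 : covering_radius H0 3) R' : covers H R' -> (3 <= R')%N.
Proof.
move=> cov; rewrite leqNgt; apply/negP => lt.
suff c2 : covers H0 2 by have := CR0.2 _ c2.
move=> u; have [S [cS eS]] := cov (col_mx u 0).
have es : \sum_(x <- map enum_val (enum S)) C x = col_mx u 0.
  by rewrite big_map big_enum -eS /colsum; apply: eq_bigr => j _; rewrite colH.
have : \sum_(x <- map enum_val (enum S)) col_mx (usubmx (C x)) (dsubmx (C x)) = col_mx u 0.
  by rewrite -es; apply: eq_bigr => x _; rewrite vsubmxK.
rewrite sum_col_mx => /eq_col_mx [top _].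
have sz : (size (map enum_val (enum S)) <= 2)%N.
  by rewrite size_map -cardE; apply: leq_trans cS _; rewrite -ltnS.
move: sz top; case: (map enum_val (enum S)) => [|x [|y [|z t]]] // _.
- by rewrite big_nil => <-; exists set0; rewrite cards0 colsum0.
- by rewrite big_cons big_nil addr0 tpoP => <-; exists (Tof (tpo x)); split => //; exact: leq_trans (Tof_card _) _.
- rewrite !big_cons big_nil addr0 !tpoP => <-.
  have [T [cT eT]] := Tof2 (tpo x) (tpo y); by exists T.
Qed.

Lemma phi0 : phi 0 = 0.
Proof. by have := phiD 0 0; rewrite addr0 => /eqP; rewrite -subr_eq subrr eq_sym => /eqP. Qed.

Lemma core (v : 'cV['F_2]_(r0 + (m + (m + m)))) :
  exists s : seq idx, [/\ (size s <= 3)%N, uniq (map cls s) & \sum_(x <- s) C x = v].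
Proof.
rewrite -[v]vsubmxK -[dsubmx v]vsubmxK.
set u := usubmx v; set a' := usubmx (dsubmx v); set bc := dsubmx (dsubmx v).
have [S [/andP[_ cS] [iS eS]]] := P0.2 u.
have u0 : uniq (map f0 (enum S)).
  by rewrite map_inj_in_uniq ?enum_uniq // => a b; rewrite !mem_enum; exact: iS.
have eS' : \sum_(j <- enum S) col j H0 = u by rewrite big_enum.
have sz : (size (enum S) <= 3)%N by rewrite -cardE.
move: u0 eS' sz; case: (enum S) => [|j1 [|j2 [|j3 [|j4 t]]]] u0 eSu sz; last by [].
- have [S2 [/andP[_ c2] [i2 e2]]] := P2.2 bc.
  have [U sz' E] := assemble phi H0 H2 beta (fun _ => 0) a' u0 i2.
  eexists; split; [|exact: U|]; first by rewrite sz'; move: c2; case: (a' != 0) => /=; lia.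
  by rewrite E !big_nil !add0r e2 -eSu big_nil.
- set a := phiI a'.
  set d := col_mx (phi (beta j1 * a)) (phi (beta j1 ^+ 2 * a)).
  have [S2 [/andP[_ c2] [i2 e2]]] := P2.2 (bc - d).
  have [U sz' E] := assemble phi H0 H2 beta (fun _ => a) 0 u0 i2.
  eexists; split; [|exact: U|]; first by rewrite sz' eqxx /=; move: c2; idtac.
  rewrite E !big_cons !big_nil e2 !addr0 -eSu big_cons big_nil addr0 /a phiIK.
  by rewrite addrC subrK.
- move: u0; rewrite /= inE andbT => n12.
  have j12 : j1 != j2 by apply: contraNneq n12 => ->.
  have [x1 [x2 [e1 e2]]] := solve2 (phiI (usubmx bc)) (phiI (dsubmx bc)) (bnz j1) (bnz j2) (binj n12).
  pose xi j := if j == j1 then x1 else x2.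
  have j21 : j2 != j1 by rewrite eq_sym.
  have i2 : {in set0 &, injective f2} by move=> ? ?; rewrite inE.
  have u0 : uniq (map f0 [:: j1; j2]) by rewrite /= inE n12.
  have [U sz' E] := assemble phi H0 H2 beta xi (a' - (phi x1 + phi x2)) u0 i2.
  eexists; split; [|exact: U|]; first by rewrite sz' cards0 /=; case: (_ != _).
  rewrite E !big_cons !big_nil -eSu !big_cons big_nil !addr0 /xi eqxx (negbTE j21).
  rewrite /colsum big_set0 addr0 add_col_mx -!phiD e1 e2 !phiIK vsubmxK.
  by congr col_mx; congr col_mx; rewrite addrC subrK.
- move: u0; rewrite /= !inE !negb_or andbT => /andP[/andP[n12 n13] n23].
  have j12 : j1 != j2 by apply: contraNneq n12 => ->.
  have j13 : j1 != j3 by apply: contraNneq n13 => ->.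
  have j23 : j2 != j3 by apply: contraNneq n23 => ->.
  have [x1 [x2 [x3 [e0 e1 e2]]]] := solve3 (phiI a') (phiI (usubmx bc)) (phiI (dsubmx bc))
     (binj n12) (binj n13) (binj n23).
  pose xi j := if j == j1 then x1 else if j == j2 then x2 else x3.
  have i2 : {in set0 &, injective f2} by move=> ? ?; rewrite inE.
  have u0 : uniq (map f0 [:: j1; j2; j3]) by rewrite /= !inE negb_or n12 n13 n23.
  have [U sz' E] := assemble phi H0 H2 beta xi 0 u0 i2.
  eexists; split; [|exact: U|]; first by rewrite sz' cards0 eqxx.
  rewrite E !big_cons !big_nil -eSu !big_cons big_nil !addr0 /xi eqxx.
  rewrite eq_sym (negbTE j12) eqxx eq_sym (negbTE j13) eq_sym (negbTE j23).
  rewrite /colsum big_set0 addr0 !add_col_mx -!phiD !addrA e0 e1 e2 !phiIK vsubmxK.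
  by [].
Qed.

Lemma charF (x : F) : x + x = 0.
Proof. by apply: (can_inj phiK); rewrite phiD dbl phi0. Qed.

Lemma c2eq (a b : F) : (a + b == 0) = (a == b).
Proof.
have Nb : - b = b by apply/eqP; rewrite eq_sym -addr_eq0 charF.
by rewrite addr_eq0 Nb.
Qed.

Lemma H2l_props S2 : [/\ size (H2l F m n0 S2) = #|S2|, uniq (H2l F m n0 S2) &
  \sum_(x <- H2l F m n0 S2) C x = col_mx 0 (col_mx 0 (colsum H2 S2))].
Proof.
split; first by rewrite /H2l size_map -cardE.
  by rewrite /H2l map_inj_uniq ?enum_uniq // => a b [].
exact: H2l_sum.
Qed.

Lemma part32 (Hm : (2 <= m)%N) (cF : #|F| = (2 ^ m)%N)
  (h23 : forall v : 'cV['F_2]_(m + m), exists S : {set 'I_n2},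
       ((#|S| == 2%N) || (#|S| == 3%N)) /\ colsum H2 S = v) v :
  exists s : seq idx, [/\ (2 <= size s <= 3)%N, uniq (map id s) & \sum_(x <- s) C x = v].
Proof.
have four : (4 <= 2 ^ m)%N by rewrite -[4%N]/(2 ^ 2)%N leq_pexp2l.
have [s [sz us es]] := core v.
have us' := map_uniq us.
have h2 : forall w : 'cV['F_2]_(m + m), exists s : seq idx,
    [/\ (2 <= size s <= 3)%N, uniq (map id s) & \sum_(x <- s) C x = col_mx 0 (col_mx 0 w)].
  move=> w; have [S2 [c2 e2]] := h23 w; have [sz2 u2 s2] := H2l_props S2.
  exists (H2l F m n0 S2); rewrite map_id sz2 u2 s2 e2; split => //.
  by case/orP: c2 => /eqP ->.
case: (leqP 2 (size s)) => [le2|lt2]; first by exists s; rewrite map_id le2 sz.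
move: es sz lt2; case: s us' {us} => [|x [|y t]] // _ es _ _.
- have [s2 [? ? e]] := h2 0; exists s2; split => //.
  by rewrite e !col_mx0 -es big_nil.
- rewrite big_cons big_nil addr0 in es; rewrite -es.
  case: x {es} => [[w|k]|[j xi]] /=.
  + have hc : (#|[set 0%R; val w]| < #|{: 'cV['F_2]_m}|)%N.
      by rewrite card_cV cards2 (leq_trans _ four) //; case: (_ != _).
    have [w1 nw1] := exists_notin hc.
    move: nw1; rewrite !inE negb_or => /andP[n0' n1'].
    have nz2 : w1 + val w != 0.
      apply: contra n1' => /eqP e; apply/eqP.
      have -> : w1 = w1 + val w + val w by rewrite -addrA dbl addr0.
      by rewrite e add0r.
    exists [:: inl (inl (exist _ w1 n0')); inl (inl (exist _ (w1 + val w) nz2))].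
    split => //.
      rewrite /= inE andbT; apply/negP => /eqP [e].
      have : val w = 0 by apply: (addrI w1); rewrite addr0 -e.
      by move/eqP; rewrite (negbTE (valP w)).
    by rewrite !big_cons big_nil /= addr0 !add_col_mx !addr0 addrA dbl add0r.
  + have [s2 [? ? e]] := h2 (col k H2); by exists s2; split.
  + have hc1 : (#|[set xi]| < #|F|)%N by rewrite cards1 cF (leq_trans _ four).
    have [y1 ny1] := exists_notin hc1.
    have hc2 : (#|[set xi; y1]| < #|F|)%N.
      by rewrite cF cards2 (leq_trans _ four) //; case: (_ != _).
    have [y2 ny2] := exists_notin hc2.
    move: ny1 ny2; rewrite !inE negb_or => ny1 /andP[ny2a ny2b].
    pose z := xi + y1 + y2.
    have zs : z + (y1 + y2) = xi.
      have -> : z + (y1 + y2) = xi + (y1 + y1) + (y2 + y2) by rewrite /z; ring.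
      by rewrite !charF !addr0.
    have nz1 : z != y1.
      rewrite -c2eq; have -> : z + y1 = xi + y2 + (y1 + y1) by rewrite /z; ring.
      by rewrite charF addr0 c2eq eq_sym.
    have nz2 : z != y2.
      rewrite -c2eq; have -> : z + y2 = xi + y1 + (y2 + y2) by rewrite /z; ring.
      by rewrite charF addr0 c2eq eq_sym.
    exists [:: inr (j, z); inr (j, y1); inr (j, y2)]; split => //.
      have E : forall a b : 'I_n0 * F, (inr a == inr b :> idx) = (a == b) by [].
      by rewrite /= !inE !E !xpair_eqE !eqxx /= (negbTE nz1) (negbTE nz2) eq_sym ny2b.
    rewrite !big_cons big_nil /= addr0 !add_col_mx -!phiD -!mulrDr zs.
    by rewrite addrA dbl add0r.
Qed.


Lemma cover_nz v : v != 0 -> exists s : seq idx,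
  [/\ (1 <= size s <= 3)%N, uniq (map cls s) & \sum_(x <- s) C x = v].
Proof.
move=> nv; have [s [sz us es]] := core v; exists s; split => //.
rewrite sz andbT; case: s us sz es => [|x s] //= _ _; rewrite big_nil => e.
by move: nv; rewrite -e eqxx.
Qed.

End Main.

Lemma card_nzvec m : #|{: nzvec m}| = (2 ^ m).-1.
Proof.
rewrite card_sig -card_cV -(cardC1 (0 : 'cV['F_2]_m)); apply: eq_card => x; by rewrite !inE.
Qed.

Definition o3 (k : nat) (h : (k < 3)%N) : 'I_3 := Ordinal h.

Unset Implicit Arguments.
Set Strict Implicit.

Theorem theorem7p3 (F : finFieldType) (m r0 n0 p0 n2 p2 : nat)
  (phi : F -> 'cV['F_2]_m)
  (H0 : 'M['F_2]_(r0, n0)) (f0 : 'I_n0 -> 'I_p0)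
  (H2 : 'M['F_2]_(m + m, n2)) (f2 : 'I_n2 -> 'I_p2)
  (beta : 'I_n0 -> F) :
  #|F| = (2 ^ m)%N ->
  (forall x y, phi (x + y) = phi x + phi y) -> bijective phi ->
  covering_radius H0 3 -> RL_partition H0 3 0 f0 ->
  covering_radius H2 2 -> RL_partition H2 2 0 f2 ->
  (2 <= m)%N -> (p0 <= 2 ^ m - 1)%N ->
  (forall j, beta j != 0) ->
  (forall i j, f0 i != f0 j -> beta i != beta j) ->
  let H := HC phi H0 H2 beta in
  #|{: HC_index F m n2 n0}| = (2 ^ m * (n0 + 1) + n2 - 1)%N /\
  \rank H = (r0 + 3 * m)%N /\
  covering_radius H 3 /\
  admits_partition_atmost H 3 0 (p0 + p2 + 1) /\
  admits_partition_atmost H 3 1 (p0 + p2 + 3) /\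
  (three_cols_zero H0 f0 \/ three_cols_zero H2 f2 ->
     admits_partition_atmost H 3 1 (p0 + p2 + 1)) /\
  ((forall v : 'cV['F_2]_(m + m), exists S : {set 'I_n2},
       ((#|S| == 2%N) || (#|S| == 3%N)) /\ colsum H2 S = v) ->
     RL_partition H 3 2 (fun j => j)).
Proof.
move=> cF phiD bij CR0 P0 CR2 P2 Hm p0le bnz binj H.
have [phiI phiK phiIK] := bij.
have core' := core phiD phiIK P0 P2 bnz binj.
have four : (4 <= 2 ^ m)%N by rewrite -[4%N]/(2 ^ 2)%N leq_pexp2l.
have [e1 ne1] : exists e1 : 'cV['F_2]_m, e1 \notin [set 0%R].
  by apply: exists_notin; rewrite cards1 card_cV (leq_trans _ four).
have [e2 ne2] : exists e2 : 'cV['F_2]_m, e2 \notin [set 0%R; e1].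
  by apply: exists_notin; rewrite cards2 card_cV (leq_trans _ four) //; case: (_ != _).
move: ne1 ne2; rewrite !inE negb_or => ne1 /andP[ne2 ne21].
have ne3 : e1 + e2 != 0.
  apply: contra ne21 => /eqP e; apply/eqP.
  have -> : e2 = e1 + e2 + e1 by rewrite addrC addrA dbl add0r.
  by rewrite e add0r.
have n31 : (e1 + e2 == e1) = false.
  by apply/negbTE; rewrite -subr_eq0 addrAC subrr add0r.
have n32 : (e1 + e2 == e2) = false.
  by apply/negbTE; rewrite -subr_eq0 -addrA subrr addr0.
have covH : covers H 3.
  move=> v; have [s [sz us es]] := core' v; have us' := map_uniq us.
  exists [set enum_rank x | x in s].
  by rewrite card_seq // colsum_seq.
have EI : forall (A B : eqType) (a b : A), (inl a == inl b :> A + B) = (a == b) by [].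
have ER : forall (A B : eqType) (a b : B), (inr a == inr b :> A + B) = (a == b) by [].
pose K0 := ('I_p0 + ('I_p2 + unit))%type.
have cK0 : #|{: K0}| = (p0 + p2 + 1)%N by rewrite !card_sum card_unit !card_ord addnA.
have sur0 : forall k : K0, exists x, cls f0 f2 (m := m) (F := F) x = k.
  case=> [k0|[k2|[]]].
  - by have [j ej] := P0.1 k0; exists (inr (j, 0)); rewrite /= ej.
  - by have [k ek] := P2.1 k2; exists (inl (inr k)); rewrite /= ek.
  - by exists (inl (inl (exist _ e1 ne1))).
split.
  rewrite !card_sum card_prod card_ord card_nzvec cF.
  have := expn_gt0 2 m; rewrite card_ord; case: (2 ^ m)%N => //= t _; lia.
split; first by rewrite (rank_cover covH); lia.
split; first by split => //; exact: lower CR0.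
split.
  exists #|{: K0}|; split; first by rewrite cK0.
  exists (fun j => enum_rank (cls f0 f2 (m := m) (F := F) (enum_val j))).
  by apply: (part_of (cls := cls f0 f2 (m := m) (F := F))).
have cnz := cover_nz phiD phiIK P0 P2 bnz binj.
have We : forall (w : 'cV['F_2]_m) (h : w != 0),
    HC_col phi H0 H2 beta (inl (inl (exist _ w h))) = col_mx 0 (col_mx w 0) by [].
split.
  pose K1 := ('I_p0 + ('I_p2 + 'I_3))%type.
  pose cls1 (x : HC_index F m n2 n0) : K1 :=
    match x with
    | inl (inl w) => inr (inr (if val w == e1 then o3 (isT : (0 < 3)%N)
                               else if val w == e2 then o3 (isT : (1 < 3)%N)
                               else o3 (isT : (2 < 3)%N)))
    | inl (inr k) => inr (inl (f2 k))
    | inr (j, _) => inl (f0 j)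
    end.
  pose pi (k : K1) : K0 := match k with
    | inl a => inl a | inr (inl b) => inr (inl b) | inr (inr _) => inr (inr tt) end.
  have piE : forall x, pi (cls1 x) = cls f0 f2 x by case=> [[w|k]|[j xi]].
  exists #|{: K1}|; split; first by rewrite !card_sum !card_ord addnA.
  exists (fun j => enum_rank (cls1 (enum_val j))).
  apply: (part_of (cls := cls1)) => //.
  - case=> [k0|[k2|i]].
    + by have [j ej] := P0.1 k0; exists (inr (j, 0)); rewrite /= ej.
    + by have [k ek] := P2.1 k2; exists (inl (inr k)); rewrite /= ek.
    + case: i => -[|[|[|i]]] hi //.
      * by exists (inl (inl (exist _ e1 ne1))); rewrite /= eqxx; congr (inr (inr _)); apply: val_inj.
      * exists (inl (inl (exist _ e2 ne2))); rewrite /= (negbTE ne21) eqxx.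
        by congr (inr (inr _)); apply: val_inj.
      * exists (inl (inl (exist _ (e1 + e2) ne3))); rewrite /=.
        rewrite n31 n32.
        by congr (inr (inr _)); apply: val_inj.
  - move=> v; have [->|nv] := eqVneq v 0.
      exists [:: inl (inl (exist _ e1 ne1)); inl (inl (exist _ e2 ne2));
                 inl (inl (exist _ (e1 + e2) ne3))]; split => //.
        by rewrite /= eqxx (negbTE ne21) n31 n32 eqxx.
      rewrite !big_cons big_nil !We addr0 !add_col_mx !addr0.
      by rewrite addrCA [e1 + (e1 + e2)]addrA dbl add0r dbl !col_mx0.
    have [s [sz us es]] := cnz v nv; exists s; split => //.
    apply: (@map_uniq _ _ pi); rewrite -map_comp.
    by rewrite (eq_map piE).
have ph0 := phi0 phiD.
split.
  move=> hz; exists #|{: K0}|; split; first by rewrite cK0.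
  exists (fun j => enum_rank (cls f0 f2 (m := m) (F := F) (enum_val j))).
  apply: (part_of (cls := cls f0 f2 (m := m) (F := F))) => //.
  move=> v; have [->|nv] := eqVneq v 0; last first.
    by have [s [? ? ?]] := cnz v nv; exists s; split.
  case: hz => [[i [j [k [nij nik njk e]]]]|[i [j [k [nij nik njk e]]]]].
  - exists [:: inr (i, 0); inr (j, 0); inr (k, 0)]; split => //.
      by rewrite /= !inE !EI negb_or nij nik njk.
    rewrite !big_cons big_nil /= !mulr0 ph0 !col_mx0 addr0 !add_col_mx !addr0.
    by rewrite addrA e col_mx0.
  - exists [:: inl (inr i); inl (inr j); inl (inr k)]; split => //.
      by rewrite /= !inE !ER !EI negb_or nij nik njk.
    rewrite !big_cons big_nil /= addr0 !add_col_mx !addr0.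
    by rewrite addrA e !col_mx0.
move=> h23.
apply: (part_of (K := HC_index F m n2 n0) (cls := id)) => //.
- by move=> j; rewrite enum_valK.
- by move=> k; exists k.
- exact: (part32 phiD phiK phiIK P0 P2 bnz binj Hm cF h23).
Qed.
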